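(* Let $N$ be a finite-dimensional Hilbert space and let $S$ be the operator in $\ell_2(\mathbb{Z},N)$ defined below. A fundamental symmetry $J$ in $\ell_2(\mathbb{Z},N)$ commutes with $S$ if and only if there exist fundamental symmetries $J_-$, $J_+$ in $N$ such that for every $(x_k)_{k\in\mathbb{Z}}\in\ell_2(\mathbb{Z},N)$, $(J(x_k))_k=J_-x_k$ for $k\le 0$ and $(J(x_k))_k=J_+x_k$ for $k\ge 1$.
   Context: Let $A$ be the operator in $\ell_2(\mathbb{Z},N)$ with domain $\mathcal{D}(A)$ consisting of all sequences $f=(f_k)_{k\in\mathbb{Z}}$ of the form $f_k=x_{k-1}-x_k$ with $(x_k)\in\ell_2(\mathbb{Z},N)$, acting by $(Af)_k=i(x_{k-1}+x_k)$. Let $S$ be the restriction of $A$ to the set of those $f\in\mathcal{D}(A)$ for which $x_0=0$. A fundamental symmetry is a bounded operator $J$ with $J=J^*$, $J^2=I$. ''$J$ commutes with $S$'' means $J\mathcal{D}(S)\subset\mathcal{D}(S)$ and $JSu=SJu$ for all $u\in\mathcal{D}(S)$. *)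

(* Defs.v *)
From HB Require Import structures.
From mathcomp Require Import all_boot all_order all_algebra.
From mathcomp Require Import all_classical all_reals all_analysis.
From mathcomp Require Import complex.
Set Implicit Arguments. Unset Strict Implicit. Unset Printing Implicit Defensive.
Import Order.TTheory GRing.Theory Num.Theory numFieldNormedType.Exports.
Local Open Scope ring_scope.

(* The finite-dimensional complex Hilbert space N is modelled as the
   column vectors 'cV[R[i]]_n with the standard inner product
   <u, v> = \sum_i u_i * conj(v_i). *)

Section L2.
Variables (R : realType) (n : nat).
Local Notation C := R[i].
Local Notation V := 'cV[C]_n.
Local Notation seqN := (int -> V).

Definition vnorm2 (v : V) : R :=
  \sum_(j < n) (complex.Re (v j 0) ^+ 2 + complex.Im (v j 0) ^+ 2).

Definition vdot (u v : V) : C := \sum_(j < n) u j 0 * conjc (v j 0).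

(* symmetric partial sums over k = -K .. K *)
Definition psum (T : nmodType) (a : int -> T) (K : nat) : T :=
  \sum_(0 <= k < K.*2.+1) a (k%:Z - K%:Z).

(* membership in l_2(Z, N): the nonnegative series \sum_k ||x_k||^2 converges *)
Definition l2 (x : seqN) : Prop :=
  exists M : R, forall K : nat, psum (fun k => vnorm2 (x k)) K <= M.

(* inner product in l_2(Z, N) (as limit of the symmetric partial sums,
   which converge absolutely for x, y in l_2) *)
Definition l2inner (x y : seqN) : C :=
  Complex (limn (fun K : nat => (complex.Re (psum (fun k => vdot (x k) (y k)) K) : R)))
          (limn (fun K : nat => (complex.Im (psum (fun k => vdot (x k) (y k)) K) : R))).

Definition l2_bounded_linear (J : seqN -> seqN) : Prop :=
  [/\ forall f, l2 f -> l2 (J f),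
      forall (a : C) f g, l2 f -> l2 g ->
        J (fun k => a *: f k + g k) = (fun k => a *: J f k + J g k)
    & exists c : R, forall f (M : R), l2 f ->
        (forall K, psum (fun k => vnorm2 (f k)) K <= M) ->
        forall K, psum (fun k => vnorm2 (J f k)) K <= c * M].

Definition l2_fund_sym (J : seqN -> seqN) : Prop :=
  [/\ l2_bounded_linear J,
      forall f g, l2 f -> l2 g -> l2inner (J f) g = l2inner f (J g)
    & forall f, l2 f -> J (J f) = f].

Definition fund_sym (J : 'M[C]_n) : Prop :=
  (map_mx conjc J)^T = J /\ J *m J = 1%:M.

(* A : f = (x_{k-1} - x_k)_k  |->  (i (x_{k-1} + x_k))_k *)
Definition Adom_of (x : seqN) : seqN := fun k => x (k - 1) - x k.
Definition Aval_of (x : seqN) : seqN := fun k => 'i *: (x (k - 1) + x k).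

Definition S_graph (f g : seqN) : Prop :=
  exists x : seqN, [/\ l2 x, x 0 = 0, f = Adom_of x & g = Aval_of x].

Definition in_domS (f : seqN) : Prop := exists g, S_graph f g.

(* J commutes with S: J D(S) ⊂ D(S) and J S u = S J u for u in D(S) *)
Definition commutes_with_S (J : seqN -> seqN) : Prop :=
  forall f g, S_graph f g -> exists g', S_graph (J f) g' /\ J g = g'.

End L2.

(* Main.v *)
Require Import Defs.
From HB Require Import structures.
From mathcomp Require Import all_boot all_order all_algebra.
From mathcomp Require Import all_classical all_reals all_analysis.
From mathcomp Require Import complex.
From mathcomp Require Import zify ring lra.
Import Order.TTheory GRing.Theory Num.Theory numFieldNormedType.Exports.
Local Open Scope ring_scope.

Lemma psum0 (T : nmodType) (a : int -> T) : psum a 0 = a 0.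
Proof. by rewrite /psum /= big_nat1. Qed.

Lemma psumS (T : nmodType) (a : int -> T) K :
  psum a K.+1 = psum a K + a (K.+1)%:Z + a (- (K.+1)%:Z).
Proof.
rewrite /psum doubleS big_nat_recr //= big_nat_recl //=.
have -> : \sum_(0 <= i < K.*2.+1) a (i.+1%:Z - K.+1%:Z) = \sum_(0 <= i < K.*2.+1) a (i%:Z - K%:Z).
  by apply: eq_bigr => i _; congr a; lia.
have -> : (0%:Z - K.+1%:Z) = - K.+1%:Z by lia.
have -> : ((K.*2.+2)%:Z - K.+1%:Z) = K.+1%:Z by lia.
by rewrite [in RHS]addrAC [a (- _) + _]addrC.
Qed.

Lemma lim_ev (R : realType) (u : nat -> R) (c : R) K0 :
  (forall K, (K0 <= K)%N -> u K = c) -> limn u = c.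
Proof.
move=> H; apply: lim_near_cst => //.
by exists K0 => // K /= HK; apply: H.
Qed.

Lemma psum_add (T : nmodType) (a b : int -> T) K :
  psum (fun k => a k + b k) K = psum a K + psum b K.
Proof. by rewrite /psum big_split. Qed.

Lemma psum_ext (T : nmodType) (a b : int -> T) K :
  (forall k, a k = b k) -> psum a K = psum b K.
Proof. by move=> H; rewrite /psum; apply: eq_bigr => i _; apply: H. Qed.

Lemma psum_mull (R : realType) (c : R) (a : int -> R) K :
  psum (fun k => c * a k) K = c * psum a K.
Proof. by rewrite /psum mulr_sumr. Qed.

Lemma psum_le (R : realType) (a b : int -> R) K :
  (forall k, a k <= b k) -> psum a K <= psum b K.
Proof. by move=> H; rewrite /psum; apply: ler_sum => i _; apply: H. Qed.

Lemma psum_ge0 (R : realType) (a : int -> R) K :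
  (forall k, 0 <= a k) -> 0 <= psum a K.
Proof. by move=> H; rewrite /psum; apply: sumr_ge0 => i _; apply: H. Qed.

Lemma psum_mono (R : realType) (a : int -> R) K L :
  (forall k, 0 <= a k) -> (K <= L)%N -> psum a K <= psum a L.
Proof.
move=> H; elim: L => [|L IH]; first by rewrite leqn0 => /eqP ->.
rewrite leq_eqVlt => /orP [/eqP -> //|]; rewrite ltnS => /IH h.
rewrite psumS; apply: (le_trans h).
by rewrite -addrA lerDl addr_ge0.
Qed.

Lemma psum_single (T : nmodType) (a : int -> T) (j : int) K :
  (forall k, k != j -> a k = 0) ->
  psum a K = if (`|j| <= K)%N then a j else 0.
Proof.
move=> H; elim: K => [|K IH].
  rewrite psum0; case: (eqVneq j 0) => [->//|hj].
  rewrite H; last by rewrite eq_sym.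
  by case: ifP => // /[!leqn0] /eqP /eqP; rewrite absz_eq0 (negPf hj).
rewrite psumS IH.
case: (eqVneq j K.+1%:Z) => [hj|h1].
  subst j.
  rewrite (H (- K.+1%:Z)); last by lia.
  rewrite (_ : (`|K.+1%:Z| <= K)%N = false); last by lia.
  rewrite (_ : (`|K.+1%:Z| <= K.+1)%N = true); last by lia.
  by rewrite add0r addr0.
case: (eqVneq j (- K.+1%:Z)) => [hj|h2].
  subst j.
  rewrite (H K.+1%:Z); last by lia.
  rewrite (_ : (`|- K.+1%:Z| <= K)%N = false); last by lia.
  rewrite (_ : (`|- K.+1%:Z| <= K.+1)%N = true); last by lia.
  by rewrite !add0r.
rewrite (H K.+1%:Z); last by rewrite eq_sym.
rewrite (H (- K.+1%:Z)); last by rewrite eq_sym.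
rewrite !addr0; have : (`|j| <= K)%N = (`|j| <= K.+1)%N by lia.
by move=> ->.
Qed.

Lemma psum_term_le (R : realType) (a : int -> R) (j : int) K :
  (forall k, 0 <= a k) -> (`|j| <= K)%N -> a j <= psum a K.
Proof.
move=> H hj.
have -> : a j = psum (fun k => if k == j then a j else 0) K.
  by rewrite (@psum_single _ _ j) ?eqxx ?hj // => k /negPf ->.
by apply: psum_le => k; case: eqP => [->//|]; rewrite H.
Qed.

Lemma psum_shift (T : nmodType) (b : int -> T) K :
  psum (fun k => b (k - 1)) K + b K%:Z + b K.+1%:Z = psum b K.+1.
Proof.
elim: K => [|K IH].
  rewrite !psumS !psum0 /=.
  have -> : (0 - 1 : int) = - 1%:Z by [].
  by rewrite [in RHS]addrAC -addrA [b 0 + _]addrC addrA.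
rewrite psumS (psumS _ b K.+1) -IH.
have -> : (K.+1%:Z - 1 = K%:Z) by lia.
have -> : (- K.+1%:Z - 1 = - K.+2%:Z) by lia.
set x := psum _ _.
rewrite -!addrA; congr (_ + _); rewrite !addrA.
rewrite [in RHS]addrC !addrA; congr (_ + _).
by rewrite [b K + _]addrC.
Qed.

Lemma psum_refl (T : nmodType) (b : int -> T) K :
  psum (fun k => b (- k)) K = psum b K.
Proof.
elim: K => [|K IH]; first by rewrite !psum0 oppr0.
by rewrite !psumS IH opprK addrAC.
Qed.

Lemma psum_trunc (T : zmodType) (b : int -> T) (K L : nat) :
  psum (fun k => if (`|k| <= K)%N then 0 else b k) L = psum b L - psum b (minn L K).
Proof.
elim: L => [|L IH].
  by rewrite !psum0 /= min0n psum0 subrr.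
rewrite psumS IH abszN /=.
case: (leqP L.+1 K) => h.
  have -> : minn L K = L by apply/minn_idPl; lia.
  by rewrite !subrr !addr0.
have -> : minn L K = K by apply/minn_idPr; lia.
by rewrite psumS [_ - _ + _]addrAC [LHS]addrAC.
Qed.
Set Implicit Arguments. Unset Strict Implicit.
Section V.
Variables (R : realType) (n : nat).
Local Notation C := R[i].
Local Notation V := 'cV[C]_n.

Lemma ReD (x y : C) : complex.Re (x + y) = complex.Re x + complex.Re y.
Proof. by case: x => a b; case: y => c d. Qed.
Lemma ImD (x y : C) : complex.Im (x + y) = complex.Im x + complex.Im y.
Proof. by case: x => a b; case: y => c d. Qed.
Lemma Re0 : complex.Re (0 : C) = 0. Proof. by []. Qed.
Lemma Im0 : complex.Im (0 : C) = 0. Proof. by []. Qed.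

Lemma Re_sum (I : Type) (r : seq I) (P : pred I) (F : I -> C) :
  complex.Re (\sum_(i <- r | P i) F i) = \sum_(i <- r | P i) complex.Re (F i).
Proof. exact: (big_morph _ ReD Re0). Qed.
Lemma Im_sum (I : Type) (r : seq I) (P : pred I) (F : I -> C) :
  complex.Im (\sum_(i <- r | P i) F i) = \sum_(i <- r | P i) complex.Im (F i).
Proof. exact: (big_morph _ ImD Im0). Qed.

Lemma ReIm_eq (x : C) : Complex (complex.Re x) (complex.Im x) = x.
Proof. by case: x. Qed.

Lemma sq_ge0 (x : C) : 0 <= complex.Re x ^+ 2 + complex.Im x ^+ 2.
Proof. by rewrite addr_ge0 // sqr_ge0. Qed.

Lemma sq_eq0 (x : C) : complex.Re x ^+ 2 + complex.Im x ^+ 2 = 0 -> x = 0.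
Proof.
case: x => a b /= h.
have ha : a = 0 by apply/eqP; rewrite -sqrf_eq0; apply/eqP; nra.
have hb : b = 0 by apply/eqP; rewrite -sqrf_eq0; apply/eqP; nra.
by rewrite ha hb.
Qed.

Lemma vnorm2_ge0 (v : V) : 0 <= vnorm2 v.
Proof. by rewrite /vnorm2 sumr_ge0 // => j _; apply: sq_ge0. Qed.

Lemma vnorm2_0 : vnorm2 (0 : V) = 0.
Proof. by rewrite /vnorm2 big1 // => j _; rewrite mxE Re0 Im0 !expr2 mulr0 addr0. Qed.

Lemma vnorm2_eq0 (v : V) : vnorm2 v <= 0 -> v = 0.
Proof.
move=> h; have h0 : vnorm2 v = 0 by apply/eqP; rewrite eq_le h vnorm2_ge0.
move: h0; rewrite /vnorm2 => /eqP; rewrite psumr_eq0; last by move=> j _; apply: sq_ge0.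
move=> /allP H; apply/matrixP => i j; rewrite (ord1 j) mxE.
by apply: sq_eq0; apply/eqP; apply: H; rewrite mem_index_enum.
Qed.

Lemma vnorm2_add (u v : V) : vnorm2 (u + v) <= 2 * vnorm2 u + 2 * vnorm2 v.
Proof.
rewrite /vnorm2 !mulr_sumr -big_split; apply: ler_sum => j _ /=; rewrite mxE.
rewrite ReD ImD.
have h1 := sqr_ge0 (complex.Re (u j 0) - complex.Re (v j 0)).
have h2 := sqr_ge0 (complex.Im (u j 0) - complex.Im (v j 0)).
lra.
Qed.

Lemma vnorm2_scale (c : C) (v : V) :
  vnorm2 (c *: v) = (complex.Re c ^+ 2 + complex.Im c ^+ 2) * vnorm2 v.
Proof.
rewrite /vnorm2 mulr_sumr; apply: eq_bigr => j _; rewrite mxE.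
case: c => a b; case: (v j 0) => c d /=; ring.
Qed.

Lemma vdot_self (u : V) : complex.Re (vdot u u) = vnorm2 u.
Proof.
rewrite /vdot Re_sum; apply: eq_bigr => j _.
case: (u j 0) => a b /=; ring.
Qed.

Lemma vdot0l (w : V) : vdot 0 w = 0.
Proof. by rewrite /vdot big1 // => j _; rewrite mxE mul0r. Qed.
Lemma vdot0r (w : V) : vdot w 0 = 0.
Proof. by rewrite /vdot big1 // => j _; rewrite mxE (raddf0 conjc) mulr0. Qed.

Lemma vdot_deltar (u : V) (b : 'I_n) : vdot u (delta_mx b 0) = u b 0.
Proof.
rewrite /vdot (bigD1 b) //= big1 ?addr0; first by rewrite mxE !eqxx /= oppr0 mulr1.
by move=> j hj; rewrite mxE (negPf hj) /= oppr0 mulr0.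
Qed.
Lemma vdot_deltal (u : V) (b : 'I_n) : vdot (delta_mx b 0) u = conjc (u b 0).
Proof.
rewrite /vdot (bigD1 b) //= big1 ?addr0; first by rewrite mxE !eqxx /= mul1r.
by move=> j hj; rewrite mxE (negPf hj) /= mul0r.
Qed.

Lemma mul_delta_entry (M : 'M[C]_n) i j : (M *m (delta_mx j 0 : V)) i 0 = M i j.
Proof. by rewrite -colE mxE. Qed.

Lemma lin_mx (L : V -> V) :
  (forall a u w, L (a *: u + w) = a *: L u + L w) ->
  forall v, L v = (\matrix_(i, j) L (delta_mx j 0) i 0) *m v.
Proof.
move=> HL.
have L0 : L 0 = 0.
  have := HL 1 0 0; rewrite !scale1r addr0.
  by move/(congr1 (fun x => x - L 0)); rewrite subrr addrK.
have Lsum : forall (r : seq 'I_n) (F : 'I_n -> C),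
    L (\sum_(j <- r) F j *: delta_mx j 0) = \sum_(j <- r) F j *: L (delta_mx j 0).
  move=> r F; elim: r => [|j r IH]; first by rewrite !big_nil.
  by rewrite !big_cons HL IH.
move=> v; rewrite {1}(matrix_sum_delta v).
under eq_bigr => i _ do rewrite big_ord1.
rewrite Lsum; apply/matrixP => i k; rewrite (ord1 k) !mxE summxE.
apply: eq_bigr => j _; rewrite !mxE mulrC.
done.
Qed.


Definition Ev (j : int) (v : V) : int -> V := fun k => if k == j then v else 0.

Lemma l2_ext (f g : int -> V) : (forall k, f k = g k) -> l2 f -> l2 g.
Proof. by move=> H; have -> : g = f by apply: funext => k; rewrite H. Qed.

Lemma l2_0 : l2 (fun _ : int => (0 : V)).
Proof.
exists 0 => K; rewrite /psum big1 // => k _; exact: vnorm2_0.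
Qed.

Lemma l2_lin (a : C) (f g : int -> V) : l2 f -> l2 g -> l2 (fun k => a *: f k + g k).
Proof.
move=> [Mf Hf] [Mg Hg].
set c := complex.Re a ^+ 2 + complex.Im a ^+ 2.
have c0 : 0 <= c by apply: sq_ge0.
exists (2 * c * Mf + 2 * Mg) => K.
apply: (le_trans (@psum_le _ _ (fun k => 2 * c * vnorm2 (f k) + 2 * vnorm2 (g k)) K _)).
  move=> k; apply: (le_trans (vnorm2_add _ _)); rewrite vnorm2_scale mulrA.
  done.
rewrite psum_add psum_mull psum_mull lerD //.
  by apply: ler_wpM2l => //; apply: mulr_ge0.
by apply: ler_wpM2l.
Qed.

Lemma l2_E (j : int) (v : V) : l2 (Ev j v).
Proof.
exists (vnorm2 v) => K.
rewrite (@psum_single _ _ j); last by move=> k hk; rewrite /Ev (negPf hk) vnorm2_0.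
by case: ifP => _; rewrite /Ev ?eqxx // vnorm2_ge0.
Qed.

Lemma l2_shift (x : int -> V) : l2 x -> l2 (fun k => x (k - 1)).
Proof.
move=> [M HM]; exists M => K; apply: le_trans (HM K.+1).
rewrite -(psum_shift _ (fun k => vnorm2 (x k)) K) -addrA lerDl.
by rewrite addr_ge0 // vnorm2_ge0.
Qed.

Lemma l2_refl (x : int -> V) : l2 x -> l2 (fun k => x (- k)).
Proof.
move=> [M HM]; exists M => K.
by rewrite (psum_refl _ (fun k => vnorm2 (x k))).
Qed.

Lemma l2_shiftL (x : int -> V) : l2 x -> l2 (fun k => x (k + 1)).
Proof.
move=> h; have := l2_refl (l2_shift (l2_refl h)).
by apply: l2_ext => k /=; congr x; lia.
Qed.

Lemma l2_Adom (x : int -> V) : l2 x -> l2 (Adom_of x).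
Proof.
move=> h; have := l2_lin (-1) h (l2_shift h).
by apply: l2_ext => k; rewrite /Adom_of scaleN1r addrC.
Qed.

Lemma l2_Aval (x : int -> V) : l2 x -> l2 (Aval_of x).
Proof.
move=> h; have h1 := l2_lin 1 (l2_shift h) h.
have := l2_lin 'i h1 l2_0.
by apply: l2_ext => k; rewrite /Aval_of scale1r addr0.
Qed.

Lemma psum_vdot_Er (x : int -> V) (k : int) (w : V) K :
  psum (fun k' => vdot (x k') (Ev k w k')) K = if (`|k| <= K)%N then vdot (x k) w else 0.
Proof.
rewrite (@psum_single _ _ k); last by move=> k' hk; rewrite /Ev (negPf hk) vdot0r.
by rewrite /Ev eqxx.
Qed.

Lemma psum_vdot_El (y : int -> V) (k : int) (w : V) K :
  psum (fun k' => vdot (Ev k w k') (y k')) K = if (`|k| <= K)%N then vdot w (y k) else 0.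
Proof.
rewrite (@psum_single _ _ k); last by move=> k' hk; rewrite /Ev (negPf hk) vdot0l.
by rewrite /Ev eqxx.
Qed.

Lemma l2inner_Er (x : int -> V) (k : int) (w : V) :
  l2inner x (Ev k w) = vdot (x k) w.
Proof.
rewrite /l2inner (@lim_ev _ _ (complex.Re (vdot (x k) w)) `|k|); last first.
  by move=> K hK; rewrite psum_vdot_Er hK.
rewrite (@lim_ev _ _ (complex.Im (vdot (x k) w)) `|k|); last first.
  by move=> K hK; rewrite psum_vdot_Er hK.
exact: ReIm_eq.
Qed.

Lemma l2inner_El (y : int -> V) (k : int) (w : V) :
  l2inner (Ev k w) y = vdot w (y k).
Proof.
rewrite /l2inner (@lim_ev _ _ (complex.Re (vdot w (y k))) `|k|); last first.
  by move=> K hK; rewrite psum_vdot_El hK.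
rewrite (@lim_ev _ _ (complex.Im (vdot w (y k))) `|k|); last first.
  by move=> K hK; rewrite psum_vdot_El hK.
exact: ReIm_eq.
Qed.

End V.

Section MainJ.
Variables (R : realType) (n : nat).
Local Notation C := R[i].
Local Notation V := 'cV[C]_n.
Variable J : (int -> V) -> (int -> V).
Hypothesis HJ : l2_fund_sym J.

Lemma Jl2 f : l2 f -> l2 (J f).
Proof. by move: HJ => [[h _ _] _ _]; apply: h. Qed.
Lemma Jlin a f g : l2 f -> l2 g ->
  J (fun k => a *: f k + g k) = (fun k => a *: J f k + J g k).
Proof. by move: HJ => [[_ h _] _ _]; apply: h. Qed.
Lemma Jsa f g : l2 f -> l2 g -> l2inner (J f) g = l2inner f (J g).
Proof. by move: HJ => [_ h _]; apply: h. Qed.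
Lemma JJ f : l2 f -> J (J f) = f.
Proof. by move: HJ => [_ _ h]; apply: h. Qed.

Lemma J0 : J (fun _ => 0) = (fun _ => 0).
Proof.
have := Jlin 1 (@l2_0 R n) (@l2_0 R n).
have -> : (fun k : int => 1 *: (0 : V) + 0) = (fun _ => 0).
  by apply: funext => k; rewrite scaler0 addr0.
move=> h; apply: funext => k; have := congr1 (fun f => f k) h => /=.
by rewrite scale1r => /(congr1 (fun x => x - J (fun _ => 0) k)); rewrite subrr addrK.
Qed.

Lemma Jscale a f : l2 f -> J (fun k => a *: f k) = (fun k => a *: J f k).
Proof.
move=> hf; have := Jlin a hf (@l2_0 R n); rewrite J0.
have -> : (fun k : int => a *: f k + 0) = (fun k => a *: f k).
  by apply: funext => k; rewrite addr0.
by move=> ->; apply: funext => k; rewrite addr0.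
Qed.

Lemma Jadd f g : l2 f -> l2 g -> J (fun k => f k + g k) = (fun k => J f k + J g k).
Proof.
move=> hf hg; have := Jlin 1 hf hg.
have -> : (fun k : int => 1 *: f k + g k) = (fun k => f k + g k).
  by apply: funext => k; rewrite scale1r.
by move=> ->; apply: funext => k; rewrite scale1r.
Qed.

Lemma vid1 (c : C) (a b : V) : (- c) *: (a - b) + c *: (a + b) = (c + c) *: b.
Proof. by apply/matrixP => i j; rewrite !mxE; ring. Qed.
Lemma vid2 (c : C) (a b : V) : c *: (a - b) + c *: (a + b) = (c + c) *: a.
Proof. by apply/matrixP => i j; rewrite !mxE; ring. Qed.

Lemma ii_neq0 : ('i + 'i : C) != 0.
Proof. by apply/eqP => /(congr1 (@complex.Im R)) /= h; lra. Qed.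

Lemma scale_inj (c : C) (u w : V) : c != 0 -> c *: u = c *: w -> u = w.
Proof.
move=> hc /(congr1 (fun v => c^-1 *: v)); rewrite !scalerA mulVf //.
by rewrite !scale1r.
Qed.

Lemma conv (Jm Jp : 'M[C]_n) :
  (forall x, l2 x -> forall k : int, J x k = if k <= 0 then Jm *m x k else Jp *m x k) ->
  commutes_with_S J.
Proof.
move=> H f g [x [hx x0 -> ->]].
exists (Aval_of (J x)); split => //.
exists (J x); split => //; first exact: Jl2.
  by rewrite H // x0 mulmx0.
  apply: funext => k; rewrite H; last exact: l2_Adom.
  rewrite /Adom_of !H //.
  case: (lerP k 0) => hk.
    by rewrite (_ : k - 1 <= 0); [rewrite mulmxBr | lia].
  case: (eqVneq k 1) => [->|h1].
    by rewrite subrr x0 lexx /= mulmxBr !mulmx0 !sub0r.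
  by rewrite (_ : (k - 1 <= 0) = false); [rewrite mulmxBr | lia].
apply: funext => k; rewrite H; last exact: l2_Aval.
rewrite /Aval_of !H //.
case: (lerP k 0) => hk.
  by rewrite (_ : k - 1 <= 0); [rewrite -scalemxAr mulmxDr | lia].
case: (eqVneq k 1) => [->|h1].
  by rewrite subrr x0 lexx /= mulmx0 !add0r -scalemxAr.
by rewrite (_ : (k - 1 <= 0) = false); [rewrite -scalemxAr mulmxDr | lia].
Qed.

Hypothesis HC : commutes_with_S J.

Lemma keyJ x : l2 x -> x 0 = 0 ->
  J x 0 = 0 /\ J (fun k => x (k - 1)) = (fun k => J x (k - 1)).
Proof.
move=> hx x0.
have hf := l2_Adom hx; have hg := l2_Aval hx.
have [g' [[y [hy y0 eAd eAv]] eJg]] :=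
  HC (ex_intro _ x (And4 hx x0 (erefl (Adom_of x)) (erefl (Aval_of x)))).
subst g'.
have hJx : J x = y.
  have h1 := Jscale ('i + 'i) hx.
  have e : (fun k => ('i + 'i) *: x k) = (fun k => (- 'i) *: Adom_of x k + Aval_of x k).
    by apply: funext => k; rewrite /Adom_of /Aval_of vid1.
  rewrite e Jlin // eAd eJg in h1.
  apply: funext => k; have := congr1 (fun f => f k) h1 => /=.
  rewrite /Adom_of /Aval_of vid1 => /esym; apply: scale_inj; exact: ii_neq0.
split; first by rewrite hJx.
have h1 := Jscale ('i + 'i) (l2_shift hx).
have e : (fun k => ('i + 'i) *: x (k - 1)) = (fun k => 'i *: Adom_of x k + Aval_of x k).
  by apply: funext => k; rewrite /Adom_of /Aval_of vid2.
rewrite e Jlin // eAd eJg in h1.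
apply: funext => k; have := congr1 (fun f => f k) h1 => /=.
rewrite /Adom_of /Aval_of vid2 hJx => /esym; apply: scale_inj; exact: ii_neq0.
Qed.


Lemma J0at x : l2 x -> x 0 = 0 -> J x 0 = 0.
Proof. by move=> hx x0; case: (keyJ hx x0). Qed.

Lemma Jshift x : l2 x -> x 0 = 0 -> J (fun k => x (k - 1)) = (fun k => J x (k - 1)).
Proof. by move=> hx x0; case: (keyJ hx x0). Qed.

Lemma J1at x : l2 x -> x 1 = 0 -> J x 1 = 0.
Proof.
move=> hx x1.
set z := fun k => x (k + 1).
have hz : l2 z by apply: l2_shiftL.
have z0 : z 0 = 0 by rewrite /z add0r.
have -> : x = (fun k => z (k - 1)) by apply: funext => k; rewrite /z subrK.
by rewrite Jshift // subrr; apply: J0at.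
Qed.

Lemma support (j : int) :
  (forall x, l2 x -> x j = 0 -> J x j = 0) ->
  forall v, J (Ev j v) = Ev j (J (Ev j v) j).
Proof.
move=> Hj v; apply: funext => k; rewrite /Ev.
case: (eqVneq k j) => [->//|hk].
set u := J (fun k0 => if k0 == j then v else 0) k.
have := Jsa (l2_E j v) (l2_E k u).
rewrite l2inner_Er l2inner_El (Hj _ (l2_E k u)); last by rewrite /Ev eq_sym (negPf hk).
rewrite vdot0r => /(congr1 (@complex.Re R)); rewrite vdot_self Re0 => h.
by apply: vnorm2_eq0; rewrite h.
Qed.

Lemma Ev_lin (j : int) a (u w : V) :
  Ev j (a *: u + w) = (fun k => a *: Ev j u k + Ev j w k).
Proof. by apply: funext => k; rewrite /Ev; case: ifP => _ //; rewrite scaler0 addr0. Qed.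

Definition Lj (j : int) (v : V) : V := J (Ev j v) j.

Lemma Lj_lin j a u w : Lj j (a *: u + w) = a *: Lj j u + Lj j w.
Proof. by rewrite /Lj Ev_lin (Jlin _ (l2_E _ _) (l2_E _ _)). Qed.

Definition Mj (j : int) : 'M[C]_n := \matrix_(i, k) Lj j (delta_mx k 0) i 0.

Lemma LjE j v : Lj j v = Mj j *m v.
Proof. exact: (lin_mx (@Lj_lin j)). Qed.

Definition Mk (k : int) (v : V) : V := if k <= 0 then Mj 0 *m v else Mj 1 *m v.

Lemma Ev_shift (j : int) (v : V) : Ev (j + 1) v = (fun k => Ev j v (k - 1)).
Proof.
apply: funext => k; rewrite /Ev.
by rewrite (_ : (k - 1 == j) = (k == j + 1)) //; lia.
Qed.

Lemma JE_pos (m : nat) v : J (Ev m.+1%:Z v) = Ev m.+1%:Z (Mj 1 *m v).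
Proof.
elim: m v => [|m IH] v.
  by rewrite (support J1at) -LjE.
have -> : m.+2%:Z = m.+1%:Z + 1 by lia.
rewrite Ev_shift (Jshift (l2_E _ _)); last by rewrite /Ev (_ : (0 == m.+1%:Z) = false) //; lia.
by rewrite IH -Ev_shift.
Qed.

Lemma JE_neg (m : nat) v : J (Ev (- m%:Z) v) = Ev (- m%:Z) (Mj 0 *m v).
Proof.
elim: m v => [|m IH] v.
  by rewrite oppr0 (support J0at) -LjE.
have e : - m%:Z = - m.+1%:Z + 1 by lia.
have := IH v; rewrite e Ev_shift (Jshift (l2_E _ _)) //.
move=> h; apply: funext => k; have := congr1 (fun f => f (k + 1)) h => /=.
rewrite (_ : k + 1 - 1 = k); last by lia.
by move=> ->; rewrite Ev_shift (_ : k + 1 - 1 = k) //; lia.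
Qed.

Lemma JE (k : int) v : J (Ev k v) = Ev k (Mk k v).
Proof.
rewrite /Mk; case: k => [[|m]|m].
- by rewrite lexx (JE_neg 0).
- by rewrite JE_pos.
- by rewrite NegzE (_ : (- m.+1%:Z <= 0) = true) ?JE_neg //; lia.
Qed.


Definition Tr (K : nat) (x : int -> V) : int -> V :=
  fun k => if (`|k| <= K)%N then x k else 0.

Lemma Tr0 x : Tr 0 x = Ev 0 (x 0).
Proof.
apply: funext => k; rewrite /Tr /Ev; case: (eqVneq k 0) => [->//|h].
by rewrite (_ : (`|k| <= 0)%N = false) //; lia.
Qed.

Lemma TrS K x : Tr K.+1 x =
  (fun k => Ev K.+1%:Z (x K.+1%:Z) k + (Ev (- K.+1%:Z) (x (- K.+1%:Z)) k + Tr K x k)).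
Proof.
apply: funext => k; rewrite /Tr /Ev.
case: (eqVneq k K.+1%:Z) => [->|h1].
  rewrite ?eqxx (_ : (K.+1%:Z == - K.+1%:Z) = false); last by lia.
  rewrite (_ : (`|K.+1%:Z| <= K)%N = false); last by lia.
  by rewrite (_ : (`|K.+1%:Z| <= K.+1)%N = true) ?addr0 //; lia.
case: (eqVneq k (- K.+1%:Z)) => [->|h2].
  rewrite (_ : (`|- K.+1%:Z| <= K)%N = false); last by lia.
  by rewrite (_ : (`|- K.+1%:Z| <= K.+1)%N = true) ?addr0 ?add0r //; lia.
rewrite !add0r (_ : (`|k| <= K.+1)%N = (`|k| <= K)%N) //; lia.
Qed.

Lemma l2_add (f g : int -> V) : l2 f -> l2 g -> l2 (fun k => f k + g k).
Proof. by move=> hf hg; apply: l2_ext (l2_lin 1 hf hg) => k; rewrite scale1r. Qed.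

Lemma Tr_l2 K x : l2 (Tr K x).
Proof.
elim: K => [|K IH]; first by rewrite Tr0; apply: l2_E.
by rewrite TrS; apply: l2_add; [apply: l2_E | apply: l2_add => //; apply: l2_E].
Qed.

Lemma JTr K x : J (Tr K x) = Tr K (fun k => Mk k (x k)).
Proof.
elim: K => [|K IH]; first by rewrite !Tr0 JE.
rewrite TrS Jadd; [|apply: l2_E| apply: l2_add; [apply: l2_E|apply: Tr_l2]].
rewrite Jadd; [|apply: l2_E|apply: Tr_l2].
by rewrite !JE IH [RHS]TrS.
Qed.

Lemma Jformula x : l2 x -> forall k, J x k = Mk k (x k).
Proof.
move=> hx k.
have [c Hc] : exists c : R, forall f (M : R), l2 f ->
        (forall K, psum (fun k => vnorm2 (f k)) K <= M) ->
        forall K, psum (fun k => vnorm2 (J f k)) K <= c * M.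
  by move: HJ => [[_ _ h] _ _].
set b := fun k => vnorm2 (x k).
have b0 : forall k, 0 <= b k by move=> k'; apply: vnorm2_ge0.
have [M HM] := hx.
set E := [set y : R | exists K, psum b K = y]%classic.
have hsup : has_sup E.
  split; first by exists (psum b 0); exists 0%N.
  by exists M => y [K <-]; apply: HM.
set s := sup E.
have hs : forall K, psum b K <= s.
  by move=> K; apply: (sup_upper_bound hsup); exists K.
have key : forall K, (`|k| <= K)%N -> vnorm2 (J x k - Mk k (x k)) <= c * (s - psum b K).
  move=> K hK.
  set r := fun k => x k - Tr K x k.
  have hr : l2 r.
    by apply: l2_ext (l2_lin (-1) (Tr_l2 K x) hx) => k'; rewrite scaleN1r addrC.
  have ex : x = (fun k => Tr K x k + r k).
    by apply: funext => k'; rewrite /r addrC subrK.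
  have eJ : J x k = Mk k (x k) + J r k.
    have := congr1 (fun f => J f k) ex; rewrite /= Jadd //; last exact: Tr_l2.
    by rewrite JTr /Tr hK => ->.
  rewrite eJ addrC addKr.
  apply: (le_trans (@psum_term_le _ (fun k => vnorm2 (J r k)) k `|k| _ (leqnn _))).
    by move=> k'; apply: vnorm2_ge0.
  apply: Hc => // L.
  rewrite (@psum_ext _ _ (fun k => if (`|k| <= K)%N then 0 else b k)); last first.
    move=> k'; rewrite /r /Tr; case: ifP => _; first by rewrite subrr vnorm2_0.
    by rewrite subr0.
  rewrite psum_trunc; case: (leqP K L) => hKL.
    by rewrite lerD2r.
  by rewrite subrr subr_ge0.
set d := vnorm2 (J x k - Mk k (x k)).
have d0 : 0 <= d by apply: vnorm2_ge0.
suff : d <= 0 by move=> /vnorm2_eq0 /eqP; rewrite subr_eq0 => /eqP.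
rewrite leNgt; apply/negP => hd.
set a := `|c| + 1.
have ha : 0 < a by rewrite /a ltr_wpDl.
have hca : c <= a by rewrite /a; apply: (le_trans (ler_norm c)); rewrite lerDl.
have heps : 0 < d / a by rewrite divr_gt0.
have [e [K0 <-] he] := sup_adherent heps hsup.
set K := maxn K0 `|k|.
have h1 : d <= c * (s - psum b K) := key K (leq_maxr _ _).
have h2 : psum b K0 <= psum b K by apply: psum_mono => //; apply: leq_maxl.
have h3 : 0 <= s - psum b K by rewrite subr_ge0.
have h4 : c * (s - psum b K) <= a * (s - psum b K) by apply: ler_wpM2r.
have h5 : a * (s - psum b K) < a * (d / a).
  by rewrite ltr_pM2l //; rewrite /s; lra.
have h6 : a * (d / a) = d by rewrite mulrC divfK // gt_eqF.
lra.
Qed.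

Lemma fund_Mk (j : int) (M : 'M[C]_n) : (forall v, Mk j v = M *m v) -> fund_sym M.
Proof.
move=> hM.
have hinv : forall v : V, M *m (M *m v) = v.
  move=> v; have := JJ (l2_E j v); rewrite !JE => /(congr1 (fun f => f j)).
  by rewrite /Ev eqxx !hM.
have hsa : forall u w : V, vdot (M *m u) w = vdot u (M *m w).
  move=> u w; have := Jsa (l2_E j u) (l2_E j w).
  by rewrite JE l2inner_Er l2inner_El JE /Ev !eqxx !hM.
split.
  apply/matrixP => a b; rewrite !mxE.
  have := hsa (delta_mx b 0) (delta_mx a 0).
  by rewrite vdot_deltar vdot_deltal !mul_delta_entry => ->.
apply/matrixP => a b.
have := congr1 (fun v : V => v a 0) (hinv (delta_mx b 0)).
by rewrite /= mulmxA mul_delta_entry !mxE eqxx andbT.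
Qed.

End MainJ.

Theorem lemma3p2 (R : realType) (n : nat) (J : (int -> 'cV[R[i]]_n) -> (int -> 'cV[R[i]]_n)) :
  l2_fund_sym J ->
  (commutes_with_S J <->
   exists Jm Jp : 'M[R[i]]_n, [/\ fund_sym Jm, fund_sym Jp &
     forall x, l2 x -> forall k : int,
       J x k = if k <= 0 then Jm *m x k else Jp *m x k]).
Proof.
move=> HJ; split.
  move=> HC; exists (Mj J 0), (Mj J 1); split.
  - by apply: (@fund_Mk R n J HJ HC 0) => v; rewrite /Mk lexx.
  - by apply: (@fund_Mk R n J HJ HC 1) => v; rewrite /Mk.
  - by move=> x hx k; rewrite (@Jformula R n J HJ HC x hx k).
by move=> [Jm [Jp [_ _ H]]]; apply: (@conv R n J HJ Jm Jp H).
Qed.
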